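(* Let $A$ be a commutative DGA and $\lambda=(0\to Z\to\widetilde L\xrightarrow{\pi}L\to0,\ Z\cong\mathbb{Q}[q])$ an MC-product data. Let $\alpha\in A^+\otimes L$ be a Maurer–Cartan element. Let $\tilde\alpha,\tilde\alpha_1\in A^+\otimes\widetilde L$ be two degree-one lifts of $\alpha$. Then $F(\tilde\alpha)$ and $F(\tilde\alpha_1)$, viewed as cocycles in $A^+\otimes Z\cong A^+[q]$, define the same cohomology class in $H^{2-q}(A)$. That is, this class depends only on $\alpha$.
   Context: All algebras are over $\mathbb{Q}$. A commutative DGA $(A,d)$ is a graded-commutative algebra $A=\bigoplus_{i\ge0}A^i$ with a degree $+1$ derivation $d$, $d^2=0$; $A^+=\bigoplus_{i>0}A^i$. A DGLA is a graded Lie algebra with a degree $+1$ differential which is a derivation. It is nilpotent if its lower central series terminates at $0$. For a DGLA $(L,d_L)$, $A\otimes L$ is the DGLA with total grading, bracket $[b_1\otimes w_1,b_2\otimes w_2]=(-1)^{|w_1||b_2|}b_1b_2\otimes[w_1,w_2]$ and differential $d(b\otimes w)=d_Ab\otimes w+(-1)^{|b|}b\otimes d_Lw$. For degree-one $\alpha$, $F(\alpha)=d\alpha+\tfrac12[\alpha,\alpha]$; $\alpha$ is Maurer–Cartan if $F(\alpha)=0$. An MC-product data consists of: - a central extension $0\to Z\to\widetilde L\xrightarrow{\pi}L\to0$ of nilpotent DGLAs (differentials $\tilde d_L$, $d_L$) concentrated in nonpositive degrees, with $Z\subseteq\ker\tilde d_L$ and $\operatorname{Im}\tilde d_L\cap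 Z=0$; - an isomorphism $Z\cong\mathbb{Q}[q]$ ($q\le0$). For a lift $\tilde\alpha$ of an MC element, $F(\tilde\alpha)\in A^+\otimes Z$ and it is a cocycle. *)

(* Defs.v *)
From HB Require Import structures.
From Stdlib Require List.
From mathcomp Require Import all_boot all_order all_algebra.
Set Implicit Arguments. Unset Strict Implicit. Unset Printing Implicit Defensive.
Import Order.TTheory GRing.Theory Num.Theory.
Local Open Scope ring_scope.

Definition graded_space (V : lmodType rat) (deg : int -> V -> Prop) : Prop :=
  [/\ (forall i, deg i 0),
      (forall i (c : rat) x y, deg i x -> deg i y -> deg i (c *: x + y)),
      (forall x : V, exists s : seq (int * V),
          (forall p, List.In p s -> deg p.1 p.2) /\ x = \sum_(p <- s) p.2)
    & (forall s : seq (int * V), uniq (map fst s) ->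
          (forall p, List.In p s -> deg p.1 p.2) ->
          \sum_(p <- s) p.2 = 0 -> forall p, List.In p s -> p.2 = 0)].

Definition sgn (n : int) : rat := (-1) ^+ `|n|%N.

Definition is_cdga (A : algType rat) (deg : int -> A -> Prop) (d : A -> A) : Prop :=
  graded_space deg /\
  (forall i (x : A), (i < 0)%R -> deg i x -> x = 0) /\
  deg 0 1 /\
  (forall i j (x y : A), deg i x -> deg j y -> deg (i + j) (x * y)) /\
  (forall i j (x y : A), deg i x -> deg j y -> x * y = sgn (i * j) *: (y * x)) /\
  (forall (c : rat) (x y : A), d (c *: x + y) = c *: d x + d y) /\
  (forall i (x : A), deg i x -> deg (i + 1) (d x)) /\
  (forall x : A, d (d x) = 0) /\
  (forall i (x y : A), deg i x -> d (x * y) = d x * y + sgn i *: (x * d y)).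

Definition is_dgla (L : lmodType rat) (deg : int -> L -> Prop)
    (br : L -> L -> L) (d : L -> L) : Prop :=
  graded_space deg /\
  (forall (c : rat) x y z, br (c *: x + y) z = c *: br x z + br y z) /\
  (forall (c : rat) x y z, br z (c *: x + y) = c *: br z x + br z y) /\
  (forall i j x y, deg i x -> deg j y -> deg (i + j) (br x y)) /\
  (forall i j x y, deg i x -> deg j y -> br x y = - (sgn (i * j) *: br y x)) /\
  (forall i j x y z, deg i x -> deg j y ->
      br x (br y z) = br (br x y) z + sgn (i * j) *: br y (br x z)) /\
  (forall (c : rat) x y, d (c *: x + y) = c *: d x + d y) /\
  (forall i x, deg i x -> deg (i + 1) (d x)) /\
  (forall x, d (d x) = 0) /\
  (forall i x y, deg i x -> d (br x y) = br (d x) y + sgn i *: br x (d y)).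

Definition nonpos_concentrated (L : lmodType rat) (deg : int -> L -> Prop) : Prop :=
  forall i x, (0 < i)%R -> deg i x -> x = 0.

Inductive brspan (L : lmodType rat) (br : L -> L -> L) (S : L -> Prop) : L -> Prop :=
  | brspan0 : brspan br S 0
  | brspan_br x y : S y -> brspan br S (br x y)
  | brspan_lin (c : rat) u v : brspan br S u -> brspan br S v -> brspan br S (c *: u + v).

Fixpoint lcs (L : lmodType rat) (br : L -> L -> L) (k : nat) : L -> Prop :=
  match k with
  | 0%N => fun _ => True
  | k'.+1 => brspan br (lcs br k')
  end.

Definition nilpotent (L : lmodType rat) (br : L -> L -> L) : Prop :=
  exists k, forall x, lcs br k x -> x = 0.

(* MC-product data: central extension 0 -> Z -> Lt -> L -> 0 (Z = ker pi) *)
(* of nilpotent DGLAs in nonpositive degrees, Z in ker dt, Im dt /\ Z = 0, *)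
(* and an isomorphism Z ~ Q[q] given by a generator z0 of Z in degree q. *)
Definition MC_product_data
    (Lt : lmodType rat) (degt : int -> Lt -> Prop) (brt : Lt -> Lt -> Lt) (dt : Lt -> Lt)
    (L : lmodType rat) (degL : int -> L -> Prop) (brL : L -> L -> L) (dL : L -> L)
    (pi : Lt -> L) (q : int) (z0 : Lt) : Prop :=
  [/\ (is_dgla degt brt dt /\ is_dgla degL brL dL /\ nilpotent brt /\ nilpotent brL /\
          nonpos_concentrated degt /\ nonpos_concentrated degL),
      [/\ (forall (c : rat) x y, pi (c *: x + y) = c *: pi x + pi y),
          (forall i x, degt i x -> degL i (pi x)),
          (forall x y, pi (brt x y) = brL (pi x) (pi y)),
          (forall x, pi (dt x) = dL (pi x))
        & (forall y, exists x, pi x = y)],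
      [/\ (forall z x, pi z = 0 -> brt z x = 0 /\ brt x z = 0),
          (forall z, pi z = 0 -> dt z = 0)
        & (forall x, pi (dt x) = 0 -> dt x = 0)]
    &
      [/\ (q <= 0)%R, z0 != 0, degt q z0
        & (forall z, pi z = 0 <-> exists c : rat, z = c *: z0)]].

(* Tensor product A (x) L of graded spaces, as formal sums of           *)
(* homogeneous pure tensors  a (x) w  (a in A^i, w in L^j), modulo the    *)
(* equality of the tensor product: two formal sums are equal iff every   *)
(* family of bilinear maps A^i x L^j -> W takes the same value on them.  *)
Record tm (A L : Type) := Tm { tdA : int; ta : A; tdL : int; tl : L }.

Definition tensor_wf (A L : Type) (degA : int -> A -> Prop) (degL : int -> L -> Prop)
    (s : seq (tm A L)) : Prop :=
  forall x, List.In x s -> degA (tdA x) (ta x) /\ degL (tdL x) (tl x).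

Definition bilin_fam (A L W : lmodType rat) (degA : int -> A -> Prop) (degL : int -> L -> Prop)
    (f : int -> int -> A -> L -> W) : Prop :=
  forall i j,
    (forall (c : rat) a1 a2 w, degA i a1 -> degA i a2 -> degL j w ->
        f i j (c *: a1 + a2) w = c *: f i j a1 w + f i j a2 w) /\
    (forall (c : rat) a w1 w2, degA i a -> degL j w1 -> degL j w2 ->
        f i j a (c *: w1 + w2) = c *: f i j a w1 + f i j a w2).

Definition teval (A L W : lmodType rat) (f : int -> int -> A -> L -> W) (s : seq (tm A L)) : W :=
  \sum_(x <- s) f (tdA x) (tdL x) (ta x) (tl x).

Definition teq (A L : lmodType rat) (degA : int -> A -> Prop) (degL : int -> L -> Prop)
    (s t : seq (tm A L)) : Prop :=
  forall (W : lmodType rat) (f : int -> int -> A -> L -> W),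
    bilin_fam degA degL f -> teval f s = teval f t.

Definition tmap (A L M : Type) (p : L -> M) (s : seq (tm A L)) : seq (tm A M) :=
  map (fun x => Tm (tdA x) (ta x) (tdL x) (p (tl x))) s.

Definition tdiff (A : algType rat) (L : lmodType rat) (dA : A -> A) (dL : L -> L)
    (s : seq (tm A L)) : seq (tm A L) :=
  flatten (map (fun x => [:: Tm (tdA x + 1) (dA (ta x)) (tdL x) (tl x);
                             Tm (tdA x) (sgn (tdA x) *: ta x) (tdL x + 1) (dL (tl x))]) s).

Definition tbr (A : algType rat) (L : lmodType rat) (br : L -> L -> L)
    (s t : seq (tm A L)) : seq (tm A L) :=
  [seq Tm (tdA x + tdA y) (sgn (tdL x * tdA y) *: (ta x * ta y))
          (tdL x + tdL y) (br (tl x) (tl y)) | x <- s, y <- t].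

Definition tscale (A : lmodType rat) (L : Type) (c : rat) (s : seq (tm A L)) : seq (tm A L) :=
  map (fun x => Tm (tdA x) (c *: ta x) (tdL x) (tl x)) s.

Definition MCF (A : algType rat) (L : lmodType rat) (dA : A -> A) (br : L -> L -> L)
    (dL : L -> L) (s : seq (tm A L)) : seq (tm A L) :=
  tdiff dA dL s ++ tscale (1 / 2) (tbr br s s).

Definition deg1_plus (A L : Type) (s : seq (tm A L)) : Prop :=
  forall x, List.In x s -> (0 < tdA x)%R /\ tdA x + tdL x = 1.

(* Main.v *)
Require Import Defs.
From HB Require Import structures.
From mathcomp Require Import all_boot all_order all_algebra.
From Stdlib Require Import ClassicalEpsilon.
From mathcomp Require Import classical_sets.
Import GRing.Theory.
Local Open Scope ring_scope.
Set Implicit Arguments. Unset Strict Implicit.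

Section Lin.
Variables (U V : lmodType rat) (f : U -> V).
Hypothesis Hf : forall (c : rat) x y, f (c *: x + y) = c *: f x + f y.
Lemma lin0 : f 0 = 0.
Proof.
have := Hf 1 0 0; rewrite !scale1r addr0 => /(congr1 (fun z => z - f 0)).
by rewrite addrK subrr.
Qed.
Lemma linD x y : f (x + y) = f x + f y.
Proof. by have := Hf 1 x y; rewrite !scale1r. Qed.
Lemma linZ (c : rat) x : f (c *: x) = c *: f x.
Proof. by have := Hf c x 0; rewrite !addr0 lin0 addr0. Qed.
Lemma linN x : f (- x) = - f x.
Proof. by rewrite -scaleN1r linZ scaleN1r. Qed.
Lemma linB x y : f (x - y) = f x - f y.
Proof. by rewrite linD linN. Qed.
Lemma lin_sum (I : Type) (r : seq I) (P : pred I) (F : I -> U) :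
  f (\sum_(i <- r | P i) F i) = \sum_(i <- r | P i) f (F i).
Proof.
elim: r => [|x r IH]; first by rewrite !big_nil lin0.
by rewrite !big_cons; case: (P x); rewrite ?linD IH.
Qed.
End Lin.

Section Grad.
Variables (V : lmodType rat) (deg : int -> V -> Prop).
Hypothesis G : graded_space deg.
Lemma deg0 i : deg i 0. Proof. by case: G. Qed.
Lemma degLin i (c : rat) x y : deg i x -> deg i y -> deg i (c *: x + y).
Proof. by case: G => _ H _ _; apply: H. Qed.
Lemma degD i x y : deg i x -> deg i y -> deg i (x + y).
Proof. by move=> hx hy; have := degLin 1 hx hy; rewrite scale1r. Qed.
Lemma degZ i (c : rat) x : deg i x -> deg i (c *: x).
Proof. by move=> hx; have := degLin c hx (deg0 i); rewrite addr0. Qed.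
Lemma degN i x : deg i x -> deg i (- x).
Proof. by move=> hx; rewrite -scaleN1r; apply: degZ. Qed.
Lemma degB i x y : deg i x -> deg i y -> deg i (x - y).
Proof. by move=> hx hy; apply: degD => //; apply: degN. Qed.
Lemma deg_sum i (I : Type) (r : seq I) (P : pred I) (F : I -> V) :
  (forall x, List.In x r -> P x -> deg i (F x)) -> deg i (\sum_(x <- r | P x) F x).
Proof.
elim: r => [|x r IH] H; first by rewrite big_nil; apply: deg0.
rewrite big_cons; have IH' := IH (fun y hy => H y (or_intror hy)).
by case: ifP => // Px; apply: degD => //; apply: H => //; left.
Qed.
Lemma deg_uniq i j v : deg i v -> deg j v -> i != j -> v = 0.
Proof.
move=> hi hj nij; case: G => _ _ _ H.
have := H [:: (i, v); (j, - v)]; rewrite /= big_cons big_seq1 /= subrr.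
rewrite inE (negPf nij) => /(_ isT) H2.
have H3 : forall p, List.In p [:: (i, v); (j, - v)] -> deg p.1 p.2.
  by move=> p [<-|[<-|[]]] //=; apply: degN.
exact: (H2 H3 erefl (i, v) (or_introl erefl)).
Qed.

Lemma In_mem (T : eqType) (x : T) s : List.In x s -> x \in s.
Proof.
elim: s => //= y s IH [->|/IH]; rewrite inE; first by rewrite eqxx.
by move=> ->; rewrite orbT.
Qed.
Lemma mem_In (T : eqType) (x : T) s : x \in s -> List.In x s.
Proof. elim: s => //= y s IH; rewrite inE => /orP [/eqP ->|/IH]; auto. Qed.

Lemma regroup (l : seq int) (s : seq (int * V)) :
  (forall p, List.In p s -> p.1 \in l) ->
  \sum_(i <- undup l) \sum_(p <- s | p.1 == i) p.2 = \sum_(p <- s) p.2.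
Proof.
move=> Hs.
rewrite (exchange_big_dep predT) //=.
have : forall p, List.In p s -> \sum_(i <- undup l | true && (p.1 == i)) p.2 = p.2.
  move=> p /Hs pl.
  rewrite -big_filter.
  have -> : [seq i <- undup l | true && (p.1 == i)] = [:: p.1].
    rewrite -(filter_pred1_uniq (undup_uniq l) (x:=p.1)) ?mem_undup //.
    by apply: eq_filter => i /=; rewrite eq_sym.
  by rewrite big_seq1.
elim: s {Hs} => [|p s IH] H; first by rewrite !big_nil.
rewrite !big_cons H; last by left.
by rewrite IH // => p' hp'; apply: H; right.
Qed.

Lemma grp0 (s : seq (int * V)) :
  (forall p, List.In p s -> deg p.1 p.2) -> \sum_(p <- s) p.2 = 0 ->
  forall j, \sum_(p <- s | p.1 == j) p.2 = 0.
Proof.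
move=> Hd H0 j.
pose t := [seq (i, \sum_(p <- s | p.1 == i) p.2) | i <- undup (map fst s)].
have Ht : map fst t = undup (map fst s) by rewrite /t -map_comp; apply: map_id.
case: G => _ _ _ H.
have Hdt : forall p, List.In p t -> deg p.1 p.2.
  move=> p /List.in_map_iff [i [<- _]] /=.
  apply: deg_sum => x hx /eqP <-; exact: Hd.
have St : \sum_(p <- t) p.2 = 0.
  rewrite big_map /= regroup // => p hp.
  by apply: map_f; apply: In_mem.
have := H t; rewrite Ht undup_uniq => /(_ isT Hdt St) Hz.
case jin : (j \in map fst s).
  apply: (Hz (j, \sum_(p <- s | p.1 == j) p.2)).
  by apply/List.in_map_iff; exists j; split => //; apply: mem_In; rewrite mem_undup.
rewrite big_seq_cond big1 // => p /andP [ps /eqP pj].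
by move: jin; rewrite -pj (map_f fst ps).
Qed.
End Grad.

Section Bil.
Variables (A L W : lmodType rat) (degA : int -> A -> Prop) (degL : int -> L -> Prop).
Hypotheses (GA : graded_space degA) (GL : graded_space degL).
Variable f : int -> int -> A -> L -> W.
Hypothesis Bf : bilin_fam degA degL f.
Lemma bf0l i j w : degL j w -> f i j 0 w = 0.
Proof.
move=> hw; have := (Bf i j).1 1 0 0 w (deg0 GA i) (deg0 GA i) hw.
rewrite !scale1r addr0 => /(congr1 (fun z => z - f i j 0 w)).
by rewrite addrK subrr.
Qed.
Lemma bf0r i j a : degA i a -> f i j a 0 = 0.
Proof.
move=> ha; have := (Bf i j).2 1 a 0 0 ha (deg0 GL j) (deg0 GL j).
rewrite !scale1r addr0 => /(congr1 (fun z => z - f i j a 0)).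
by rewrite addrK subrr.
Qed.
Lemma bfZl i j c a w : degA i a -> degL j w -> f i j (c *: a) w = c *: f i j a w.
Proof.
move=> ha hw; have := (Bf i j).1 c a 0 w ha (deg0 GA i) hw.
by rewrite addr0 bf0l // addr0.
Qed.
Lemma bfDl i j a1 a2 w : degA i a1 -> degA i a2 -> degL j w -> f i j (a1 + a2) w = f i j a1 w + f i j a2 w.
Proof. by move=> h1 h2 hw; have := (Bf i j).1 1 a1 a2 w h1 h2 hw; rewrite !scale1r. Qed.
Lemma bfZr i j c a w : degA i a -> degL j w -> f i j a (c *: w) = c *: f i j a w.
Proof.
move=> ha hw; have := (Bf i j).2 c a w 0 ha hw (deg0 GL j).
by rewrite addr0 bf0r // addr0.
Qed.
Lemma bfDr i j a w1 w2 : degA i a -> degL j w1 -> degL j w2 -> f i j a (w1 + w2) = f i j a w1 + f i j a w2.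
Proof. by move=> ha h1 h2; have := (Bf i j).2 1 a w1 w2 ha h1 h2; rewrite !scale1r. Qed.
Lemma bfBr i j a w1 w2 : degA i a -> degL j w1 -> degL j w2 -> f i j a (w1 - w2) = f i j a w1 - f i j a w2.
Proof.
move=> ha h1 h2; rewrite bfDr //; last exact: degN.
by rewrite -scaleN1r bfZr // scaleN1r.
Qed.
Lemma bf_suml i j (I : Type) (r : seq I) (F : I -> A) w :
  (forall x, List.In x r -> degA i (F x)) -> degL j w ->
  f i j (\sum_(x <- r) F x) w = \sum_(x <- r) f i j (F x) w.
Proof.
move=> H hw; elim: r H => [|x r IH] H; first by rewrite !big_nil bf0l.
rewrite !big_cons bfDl //; first by rewrite IH // => y hy; apply: H; right.
  by apply: H; left.
by apply: deg_sum => // y hy _; apply: H; right.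
Qed.
Lemma teval_cat (s t : seq (tm A L)) : teval f (s ++ t) = teval f s + teval f t.
Proof. by rewrite /teval big_cat. Qed.
Lemma teval_tscale c (s : seq (tm A L)) : tensor_wf degA degL s ->
  teval f (tscale c s) = c *: teval f s.
Proof.
rewrite /teval /tscale big_map scaler_sumr => H.
elim: s H => [|x s IH] H; first by rewrite !big_nil.
rewrite !big_cons /= IH; last by move=> y hy; apply: H; right.
by have [h1 h2] := H x (or_introl erefl); rewrite bfZl.
Qed.
End Bil.

Lemma wf_cat (A L : Type) degA degL (s t : seq (tm A L)) :
  tensor_wf degA degL s -> tensor_wf degA degL t -> tensor_wf degA degL (s ++ t).
Proof. by move=> hs ht x hx; case: (List.in_app_or _ _ _ hx) => h; [apply: hs|apply: ht]. Qed.

Lemma wf_tscale (A L : lmodType rat) degA (degL : int -> L -> Prop) (GA : graded_space degA) c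
   (s : seq (tm A L)) : tensor_wf degA degL s -> tensor_wf degA degL (tscale c s).
Proof.
move=> hs x /List.in_map_iff [y [<- hy]] /=; have [h1 h2] := hs y hy.
by split => //; apply: degZ.
Qed.

Lemma In_allpairs (I J K : Type) (h : I -> J -> K) (s : seq I) (t : seq J) z :
  List.In z [seq h x y | x <- s, y <- t] -> exists x y, [/\ List.In x s, List.In y t & z = h x y].
Proof.
elim: s => [|x s IH] //= hz; case: (List.in_app_or _ _ _ hz).
  move=> /List.in_map_iff [y [<- hy]].
  by exists x, y; split => //; left.
move=> /IH [x' [y [h1 h2 ->]]].
by exists x', y; split => //; right.
Qed.

Definition tot (A L : Type) (n : int) (s : seq (tm A L)) :=
  forall x, List.In x s -> tdA x + tdL x = n.

Lemma tot_cat (A L : Type) n (s t : seq (tm A L)) : tot n s -> tot n t -> tot n (s ++ t).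
Proof. by move=> hs ht x hx; case: (List.in_app_or _ _ _ hx) => h; [apply: hs|apply: ht]. Qed.
Lemma tot_tscale (A : lmodType rat) (L : Type) n c (s : seq (tm A L)) : tot n s -> tot n (tscale c s).
Proof. by move=> hs x /List.in_map_iff [y [<- hy]] /=; apply: hs. Qed.

Section Tens.
Variables (A : algType rat) (L : lmodType rat) (degA : int -> A -> Prop) (degL : int -> L -> Prop).
Variables (dA : A -> A) (br : L -> L -> L) (dL : L -> L).
Hypotheses (CA : is_cdga degA dA) (DL : is_dgla degL br dL).

Implicit Types (s t u : seq (tm A L)).
Let GA : graded_space degA := CA.1.
Let GL : graded_space degL := DL.1.
Let degM : forall i j (x y : A), degA i x -> degA j y -> degA (i + j) (x * y).
Proof. by case: CA => _ [_ [_ [H _]]]. Qed.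
Let dAlin : forall (c : rat) (x y : A), dA (c *: x + y) = c *: dA x + dA y.
Proof. by case: CA => _ [_ [_ [_ [_ [H _]]]]]. Qed.
Let dAdeg : forall i (x : A), degA i x -> degA (i + 1) (dA x).
Proof. by case: CA => _ [_ [_ [_ [_ [_ [H _]]]]]]. Qed.
Let brl : forall (c : rat) x y z, br (c *: x + y) z = c *: br x z + br y z.
Proof. by case: DL => _ [H _]. Qed.
Let brr : forall (c : rat) x y z, br z (c *: x + y) = c *: br z x + br z y.
Proof. by case: DL => _ [_ [H _]]. Qed.
Let brdeg : forall i j x y, degL i x -> degL j y -> degL (i + j) (br x y).
Proof. by case: DL => _ [_ [_ [H _]]]. Qed.
Let dLlin : forall (c : rat) x y, dL (c *: x + y) = c *: dL x + dL y.
Proof. by case: DL => _ [_ [_ [_ [_ [_ [H _]]]]]]. Qed.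
Let dLdeg : forall i x, degL i x -> degL (i + 1) (dL x).
Proof. by case: DL => _ [_ [_ [_ [_ [_ [_ [H _]]]]]]]. Qed.

Lemma wf_tdiff s : tensor_wf degA degL s -> tensor_wf degA degL (tdiff dA dL s).
Proof.
elim: s => [|x s IH] hs //=.
have [h1 h2] := hs x (or_introl erefl).
move=> y [<-|[<-|]] /=; first by split => //; apply: dAdeg.
  by split; [apply: (degZ GA)|apply: dLdeg].
by apply: IH => z hz; apply: hs; right.
Qed.

Lemma tdiff_cat s t : tdiff dA dL (s ++ t) = tdiff dA dL s ++ tdiff dA dL t.
Proof. by rewrite /tdiff map_cat flatten_cat. Qed.

Lemma wf_tbr s t : tensor_wf degA degL s -> tensor_wf degA degL t ->
  tensor_wf degA degL (tbr br s t).
Proof.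
move=> hs ht z hz; have [x [y [hx hy ->]]] := In_allpairs hz; rewrite /=.
have [h1 h2] := hs x hx; have [h3 h4] := ht y hy.
by split; [apply: (degZ GA); apply: degM|apply: brdeg].
Qed.

Lemma tot_tdiff s : tot 1 s -> tot 2 (tdiff dA dL s).
Proof.
elim: s => [|x s IH] hs //=.
have h := hs x (or_introl erefl).
move=> y [<-|[<-|]] /=; first by rewrite -addrA (addrC 1) addrA h.
  by rewrite addrA h.
by apply: IH => z hz; apply: hs; right.
Qed.

Lemma tot_tbr s t : tot 1 s -> tot 1 t -> tot 2 (tbr br s t).
Proof.
move=> hs ht z hz; have [x [y [hx hy ->]]] := In_allpairs hz; rewrite /=.
have h1 := hs x hx; have h2 := ht y hy.
by rewrite addrACA h1 h2.
Qed.

Lemma wf_MCF s : tensor_wf degA degL s -> tensor_wf degA degL (MCF dA br dL s).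
Proof.
move=> hs; apply: wf_cat; first exact: wf_tdiff.
by apply: wf_tscale => //; apply: wf_tbr.
Qed.

Lemma tot_MCF s : tot 1 s -> tot 2 (MCF dA br dL s).
Proof.
move=> hs; apply: tot_cat; first exact: tot_tdiff.
by apply: tot_tscale; apply: tot_tbr.
Qed.

Lemma teval_tbr (W : lmodType rat) (f : int -> int -> A -> L -> W) s t :
  teval f (tbr br s t) = \sum_(x <- s) \sum_(y <- t)
    f (tdA x + tdA y) (tdL x + tdL y) (sgn (tdL x * tdA y) *: (ta x * ta y)) (br (tl x) (tl y)).
Proof. by rewrite /teval /tbr big_allpairs_dep. Qed.

Lemma teq_tdiff s s' : tensor_wf degA degL s -> tensor_wf degA degL s' ->
  teq degA degL s s' -> teq degA degL (tdiff dA dL s) (tdiff dA dL s').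
Proof.
move=> hs hs' E W f Bf.
pose g i j a w := f (i + 1) j (dA a) w + f i (j + 1) (sgn i *: a) (dL w).
have key : forall u, teval f (tdiff dA dL u) = teval g u.
  move=> u; rewrite /teval /tdiff big_flatten /= big_map.
  by apply: eq_bigr => x _; rewrite big_cons big_seq1.
rewrite !key; apply: E => i j; split.
  move=> c a1 a2 w h1 h2 hw; rewrite /g dAlin.
  have e : sgn i *: (c *: a1 + a2) = c *: (sgn i *: a1) + sgn i *: a2.
    by rewrite scalerDr !scalerA mulrC.
  rewrite e (Bf _ _).1 ?(Bf _ _).2 ?(Bf _ _).1; try (apply: dAdeg || apply: dLdeg || apply: (degZ GA)); try done.
  by rewrite scalerDr addrACA.
move=> c a w1 w2 ha h1 h2; rewrite /g dLlin (Bf _ _).2 ?(Bf _ _).2; try (apply: dAdeg || apply: dLdeg || apply: (degZ GA)); try done.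
by rewrite scalerDr addrACA.
Qed.

Lemma teq_tbr_l s s' t : tensor_wf degA degL t ->
  teq degA degL s s' -> teq degA degL (tbr br s t) (tbr br s' t).
Proof.
move=> ht E W f Bf; rewrite !teval_tbr.
pose g i j a w := \sum_(y <- t) f (i + tdA y) (j + tdL y) (sgn (j * tdA y) *: (a * ta y)) (br w (tl y)).
have := E W g; rewrite /teval /g; apply => i j; split.
  move=> c a1 a2 w h1 h2 hw; rewrite scaler_sumr -big_split /=.
  clear g; elim: t ht => [|y t IH] ht; first by rewrite !big_nil.
  have [h3 h4] := ht y (or_introl erefl).
  rewrite !big_cons IH; last by move=> z hz; apply: ht; right.
  congr (_ + _).
  have e : sgn (j * tdA y) *: ((c *: a1 + a2) * ta y) =
     c *: (sgn (j * tdA y) *: (a1 * ta y)) + sgn (j * tdA y) *: (a2 * ta y).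
    by rewrite mulrDl -scalerAl scalerDr !scalerA (mulrC (sgn _)).
  rewrite e (Bf _ _).1 //.
    by apply: (degZ GA) => //; apply: degM.
  by apply: (degZ GA) => //; apply: degM.
  by apply: brdeg.
move=> c a w1 w2 ha h1 h2; rewrite scaler_sumr -big_split /=.
clear g; elim: t ht => [|y t IH] ht; first by rewrite !big_nil.
have [h3 h4] := ht y (or_introl erefl).
rewrite !big_cons IH; last by move=> z hz; apply: ht; right.
congr (_ + _).
by rewrite brl (Bf _ _).2 //; [apply: (degZ GA) => //; apply: degM|apply: brdeg|apply: brdeg].
Qed.

Lemma teq_tbr_r s t t' : tensor_wf degA degL s ->
  teq degA degL t t' -> teq degA degL (tbr br s t) (tbr br s t').
Proof.
move=> hs E W f Bf; rewrite !teval_tbr (exchange_big _ s t) (exchange_big _ s t') /=.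
pose g i j a w := \sum_(x <- s) f (tdA x + i) (tdL x + j) (sgn (tdL x * i) *: (ta x * a)) (br (tl x) w).
have := E W g; rewrite /teval /g; apply => i j; split.
  move=> c a1 a2 w h1 h2 hw; rewrite scaler_sumr -big_split /=.
  clear g; elim: s hs => [|x s IH] hs; first by rewrite !big_nil.
  have [h3 h4] := hs x (or_introl erefl).
  rewrite !big_cons IH; last by move=> z hz; apply: hs; right.
  congr (_ + _).
  have e : sgn (tdL x * i) *: (ta x * (c *: a1 + a2)) =
     c *: (sgn (tdL x * i) *: (ta x * a1)) + sgn (tdL x * i) *: (ta x * a2).
    by rewrite mulrDr -scalerAr scalerDr !scalerA (mulrC (sgn _)).
  rewrite e (Bf _ _).1 //.
    by apply: (degZ GA) => //; apply: degM.
  by apply: (degZ GA) => //; apply: degM.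
  by apply: brdeg.
move=> c a w1 w2 ha h1 h2; rewrite scaler_sumr -big_split /=.
clear g; elim: s hs => [|x s IH] hs; first by rewrite !big_nil.
have [h3 h4] := hs x (or_introl erefl).
rewrite !big_cons IH; last by move=> z hz; apply: hs; right.
congr (_ + _).
by rewrite brr (Bf _ _).2 //; [apply: (degZ GA) => //; apply: degM|apply: brdeg|apply: brdeg].
Qed.

Lemma teq_MCF s s' : tensor_wf degA degL s -> tensor_wf degA degL s' ->
  teq degA degL s s' -> teq degA degL (MCF dA br dL s) (MCF dA br dL s').
Proof.
move=> hs hs' E W f Bf; rewrite /MCF !teval_cat.
rewrite (teq_tdiff hs hs' E Bf) !(teval_tscale GA Bf); try (apply: wf_tbr => //).
congr (_ + _ *: _).
rewrite (teq_tbr_l hs E Bf); exact: (teq_tbr_r hs' E Bf).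
Qed.

End Tens.

From Stdlib Require Import Classical.

Definition lin_closed (V : lmodType rat) (X : V -> Prop) :=
  forall (c : rat) x y, X x -> X y -> X (c *: x + y).

Lemma ex_functional (V : lmodType rat) (z0 : V) : z0 != 0 ->
  exists phi : V -> rat, (forall (c : rat) x y, phi (c *: x + y) = c * phi x + phi y) /\ phi z0 = 1.
Proof.
move=> nz.
pose P (X : set V) := lin_closed X /\ ~ X z0.
have [M [[MC Mz] Mmax]] : exists M, P M /\ forall B, (M `<` B)%classic -> ~ P B.
  apply: Zorn_bigcup => F FP Ftot; split.
    move=> c x y [X FX Xx] [Y FY Yy].
    have [XY|YX] := Ftot X Y FX FY.
      exists Y => //; apply: (FP Y FY).1 => //; exact: XY.
    exists X => //; apply: (FP X FX).1 => //; exact: YX.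
  by move=> [X FX Xz]; apply: (FP X FX).2.
have M0 : M 0.
  apply: NNPP => nM0.
  have Mempty : forall m, ~ M m.
    by move=> m Mm; apply: nM0; have := MC (-1) m m Mm Mm; rewrite scaleN1r addNr.
  apply: (Mmax (fun x => x = 0)); first split.
  - by move=> x /Mempty.
  - by move/(_ 0 erefl).
  split; first by move=> c x y /= -> ->; rewrite scaler0 addr0.
  by move=> /= z00; move: nz; rewrite z00 eqxx.
have MZ : forall (c : rat) x, M x -> M (c *: x) by move=> c x Mx; have := MC c x 0 Mx M0; rewrite addr0.
have MD : forall x y, M x -> M y -> M (x + y) by move=> x y Mx My; have := MC 1 x y Mx My; rewrite scale1r.
have MB : forall x y, M x -> M y -> M (x - y).
  by move=> x y Mx My; apply: MD => //; rewrite -scaleN1r; apply: MZ.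
have ex : forall v, exists k : rat, M (v - k *: z0).
  move=> v; apply: NNPP => nv.
  pose B := (fun w => exists m (k : rat), M m /\ w = m + k *: v).
  apply: (Mmax B); first split.
  - by move=> m Mm; exists m, 0; rewrite scale0r addr0.
  - move=> BM; apply: nv; exists 0; rewrite scale0r subr0; apply: BM.
    by exists 0, 1; rewrite scale1r add0r.
  split.
    move=> c x y [m1 [k1 [M1 ->]]] [m2 [k2 [M2 ->]]].
    exists (c *: m1 + m2), (c * k1 + k2); split; first by apply: MC.
    by rewrite scalerDr scalerDl scalerA addrACA.
  move=> [m [k [Mm e]]].
  have [k0|k0] := eqVneq k 0.
    by apply: Mz; rewrite e k0 scale0r addr0.
  apply: nv; exists k^-1.
  have -> : v - k^-1 *: z0 = (- k^-1) *: m.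
    by rewrite e scalerDr scalerA mulVf // scale1r opprD addrCA subrr addr0 scaleNr.
  by apply: MZ.
have uniq : forall v (k k' : rat), M (v - k *: z0) -> M (v - k' *: z0) -> k = k'.
  move=> v k k' h h'; apply/eqP; apply: contraT => nk.
  have := MB _ _ h h'.
  rewrite opprB addrC addrA subrK -scalerBl => /(MZ (k' - k)^-1).
  rewrite scalerA mulVf ?scale1r //; last by rewrite subr_eq0 eq_sym.
have phiex : forall v, {k : rat | M (v - k *: z0)}.
  by move=> v; apply: constructive_indefinite_description; apply: ex.
exists (fun v => sval (phiex v)); split.
  move=> c x y; symmetry; apply: (uniq (c *: x + y)).
    have := MC c _ _ (svalP (phiex x)) (svalP (phiex y)).
    congr M.
    by rewrite scalerBr scalerA addrACA -opprD -scalerDl.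
  exact: svalP (phiex _).
apply: (uniq z0); first exact: svalP (phiex _).
by rewrite scale1r subrr.
Qed.

Lemma tmap_tdiff (A : algType rat) (Lt L : lmodType rat) (pi : Lt -> L) dA dt dL (s : seq (tm A Lt)) :
  (forall x, pi (dt x) = dL (pi x)) ->
  tmap pi (tdiff dA dt s) = tdiff dA dL (tmap pi s).
Proof. by move=> H; elim: s => //= x s IH; rewrite H IH. Qed.

Lemma tmap_tbr (A : algType rat) (Lt L : lmodType rat) (pi : Lt -> L) brt brL (s t : seq (tm A Lt)) :
  (forall x y, pi (brt x y) = brL (pi x) (pi y)) ->
  tmap pi (tbr brt s t) = tbr brL (tmap pi s) (tmap pi t).
Proof.
move=> H; rewrite /tbr /tmap map_allpairs allpairs_mapl allpairs_mapr.
by apply: eq_allpairs => x y /=; rewrite H.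
Qed.

Lemma tmap_tscale (A Lt L : lmodType rat) (pi : Lt -> L) c (s : seq (tm A Lt)) :
  tmap pi (tscale c s) = tscale c (tmap pi s).
Proof. by elim: s => //= x s ->. Qed.

Lemma tmap_cat (A Lt L : Type) (pi : Lt -> L) (s t : seq (tm A Lt)) :
  tmap pi (s ++ t) = tmap pi s ++ tmap pi t.
Proof. exact: map_cat. Qed.

Lemma wf_tmap (A Lt L : Type) degA degt degL (pi : Lt -> L) (s : seq (tm A Lt)) :
  (forall i x, degt i x -> degL i (pi x)) ->
  tensor_wf degA degt s -> tensor_wf degA degL (tmap pi s).
Proof.
move=> H hs x /List.in_map_iff [y [<- hy]] /=; have [h1 h2] := hs y hy; split => //.
exact: H.
Qed.

Lemma teq_trans (A L : lmodType rat) degA (degL : int -> L -> Prop) (s t u : seq (tm A L)) :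
  teq degA degL s t -> teq degA degL t u -> teq degA degL s u.
Proof. by move=> h1 h2 W f Bf; rewrite (h1 W f Bf) (h2 W f Bf). Qed.

Unset Implicit Arguments. Set Strict Implicit.
Theorem lemma3p4
  (A : algType rat) (degA : int -> A -> Prop) (dA : A -> A)
  (Lt : lmodType rat) (degt : int -> Lt -> Prop) (brt : Lt -> Lt -> Lt) (dt : Lt -> Lt)
  (L : lmodType rat) (degL : int -> L -> Prop) (brL : L -> L -> L) (dL : L -> L)
  (pi : Lt -> L) (q : int) (z0 : Lt)
  (alpha : seq (tm A L)) (alphat alphat1 : seq (tm A Lt)) :
  is_cdga degA dA ->
  MC_product_data degt brt dt degL brL dL pi q z0 ->
  (* alpha is a Maurer-Cartan element of A^+ (x) L *)
  tensor_wf degA degL alpha -> deg1_plus alpha ->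
  teq degA degL (MCF dA brL dL alpha) [::] ->
  (* alphat, alphat1 are degree-one lifts of alpha in A^+ (x) Lt *)
  tensor_wf degA degt alphat -> deg1_plus alphat ->
  teq degA degL (tmap pi alphat) alpha ->
  tensor_wf degA degt alphat1 -> deg1_plus alphat1 ->
  teq degA degL (tmap pi alphat1) alpha ->
  (* F(alphat), F(alphat1) lie in A^+ (x) Z = A^+ (x) Q z0 ... *)
  (exists c, degA (2 - q) c /\ teq degA degt (MCF dA brt dt alphat) [:: Tm (2 - q) c q z0]) /\
  (exists c1, degA (2 - q) c1 /\ teq degA degt (MCF dA brt dt alphat1) [:: Tm (2 - q) c1 q z0]) /\
  (* ... and the corresponding elements of A^(2-q) are cohomologous *)
  (forall c c1, degA (2 - q) c -> degA (2 - q) c1 ->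
     teq degA degt (MCF dA brt dt alphat) [:: Tm (2 - q) c q z0] ->
     teq degA degt (MCF dA brt dt alphat1) [:: Tm (2 - q) c1 q z0] ->
     exists b, degA (1 - q) b /\ dA b = c - c1).
Proof.
move=> CA MC wfa d1a MCa wft d1t Et wft1 d1t1 Et1.
case: MC => [[DLt [DL _]] [pilin pideg pibr pid pisurj] [Zcent Zd _] [_ nz0 degz0 kerZ]].
have GA : graded_space degA := CA.1.
have Gt : graded_space degt := DLt.1.
have GL : graded_space degL := DL.1.
have [phi [philin phiz0]] := ex_functional nz0.
have dAlin : forall (c : rat) (x y : A), dA (c *: x + y) = c *: dA x + dA y.
  by case: CA => _ [_ [_ [_ [_ [H _]]]]].
have degM : forall i j (x y : A), degA i x -> degA j y -> degA (i + j) (x * y).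
  by case: CA => _ [_ [_ [H _]]].
have dtz0 : dt z0 = 0 by apply: Zd; apply/kerZ; exists 1; rewrite scale1r.
have gsurj : forall j y, degL j y -> exists x, degt j x /\ pi x = y.
  move=> j y hy; have [x ex] := pisurj y.
  have [_ _ dec _] := Gt; have [s [hs sx]] := dec x.
  pose s' := (j, - y) :: [seq (p.1, pi p.2) | p <- s].
  have hs' : forall p, List.In p s' -> degL p.1 p.2.
    move=> p [<-|/List.in_map_iff [p' [<- hp']]] /=; last by apply: pideg; apply: hs.
    exact: degN.
  have := grp0 GL hs'; rewrite big_cons big_map /= -lin_sum // -sx ex addNr.
  move=> /(_ erefl j); rewrite big_cons /= eqxx big_map /= -lin_sum //.
  move=> /eqP; rewrite addrC subr_eq0 => /eqP e.
  exists (\sum_(p <- s | p.1 == j) p.2); split; last by rewrite e.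
  by apply: (deg_sum Gt) => // p hp /eqP <-; apply: hs.
have phiD : forall x y, phi (x + y) = phi x + phi y.
  by move=> x y; have := philin 1 x y; rewrite scale1r mul1r.
have phi0 : phi 0 = 0.
  have := phiD 0 0; rewrite addr0 => /(congr1 (fun z => z - phi 0)); by rewrite addrK subrr.
have phiZ : forall (k : rat) x, phi (k *: x) = k * phi x.
  by move=> k x; have := philin k x 0; rewrite addr0 phi0 addr0.
have liftex : forall j y, exists x, degL j y -> degt j x /\ pi x = y.
  move=> j y; case: (classic (degL j y)) => h.
    by have [x hx] := gsurj j y h; exists x.
  by exists 0.
pose lift j y := sval (constructive_indefinite_description _ (liftex j y)).
have liftP : forall j y, degL j y -> degt j (lift j y) /\ pi (lift j y) = y.
  by move=> j y; exact: svalP (constructive_indefinite_description _ (liftex j y)).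
pose sig j y := lift j y - (if j == q then phi (lift j y) else 0) *: z0.
have sig_pi : forall j w, degt j w -> sig j (pi w) = w - (if j == q then phi w else 0) *: z0.
  move=> j w hw; have [hx ex] := liftP j (pi w) (pideg _ _ hw).
  rewrite /sig; move: hx ex; set x := lift j (pi w) => hx ex.
  have : pi (x - w) = 0 by rewrite (linB pilin) ex subrr.
  move=> /kerZ [k ek].
  have xe : x = w + k *: z0 by rewrite -ek addrC subrK.
  case: eqP => [jq|njq].
    by rewrite xe phiD phiZ phiz0 mulr1 scalerDl opprD addrACA subrr addr0.
  have kz : k *: z0 = 0.
    apply: (deg_uniq Gt (i := j) (j := q)); last by apply/eqP.
      by rewrite -ek; apply: (degB Gt).
    exact: (degZ Gt).
  by rewrite !scale0r !subr0 xe kz addr0.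
have sig_deg : forall j y, degL j y -> degt j (sig j y).
  move=> j y hy; have [hx _] := liftP j y hy; rewrite /sig; case: eqP => [e|_].
    by apply: (degB Gt) => //; rewrite e; apply: (degZ Gt).
  by rewrite scale0r subr0.
have sig_lin : forall j (c : rat) y1 y2, degL j y1 -> degL j y2 ->
    sig j (c *: y1 + y2) = c *: sig j y1 + sig j y2.
  move=> j c y1 y2 h1 h2; have [hx1 e1] := liftP j y1 h1; have [hx2 e2] := liftP j y2 h2.
  have key : sig j (pi (c *: lift j y1 + lift j y2)) = c *: sig j (pi (lift j y1)) + sig j (pi (lift j y2)).
    rewrite !sig_pi //; last by apply: (degLin Gt).
    case: eqP => _; last by rewrite !scale0r !subr0.
    by rewrite philin scalerDl -scalerA scalerBr opprD addrACA.
  by move: key; rewrite pilin e1 e2.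
have kernel : forall n (s : seq (tm A Lt)), tensor_wf degA degt s -> tot n s ->
    teq degA degL (tmap pi s) [::] ->
    exists c, degA (n - q) c /\ teq degA degt s [:: Tm (n - q) c q z0].
  move=> n s wfs tots E.
  have degc : forall x, List.In x s -> tdL x == q -> degA (n - q) (phi (tl x) *: ta x).
    move=> x hx /eqP e; have [h1 _] := wfs x hx; have := tots x hx.
    by rewrite e => <-; rewrite addrK; apply: (degZ GA).
  exists (\sum_(x <- s | tdL x == q) phi (tl x) *: ta x); split.
    by apply: (deg_sum GA) => x hx hq; apply: degc.
  move=> W f Bf.
  pose g i j a y := f i j a (sig j y).
  have Bg : bilin_fam degA degL g.
    move=> i j; split.
      by move=> c a1 a2 y h1 h2 hy; rewrite /g (Bf i j).1 //; apply: sig_deg.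
    by move=> c a y1 y2 ha h1 h2; rewrite /g sig_lin // (Bf i j).2 //; apply: sig_deg.
  have := E W g Bg; rewrite /teval big_nil big_map big_seq1 /=.
  have claim : forall s', (forall x, List.In x s' -> List.In x s) ->
     \sum_(x <- s') g (tdA x) (tdL x) (ta x) (pi (tl x)) =
     \sum_(x <- s') f (tdA x) (tdL x) (ta x) (tl x)
       - f (n - q) q (\sum_(x <- s' | tdL x == q) phi (tl x) *: ta x) z0.
    elim=> [|x s' IH] sub; first by rewrite !big_nil (bf0l GA Bf) // subr0.
    have hx := sub x (or_introl erefl); have [h1 h2] := wfs x hx.
    have sub' : forall y, List.In y s' -> List.In y s by move=> y hy; apply: sub; right.
    have dC : degA (n - q) (\sum_(x <- s' | tdL x == q) phi (tl x) *: ta x).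
      by apply: (deg_sum GA) => y hy hq; apply: degc => //; apply: sub'.
    rewrite !big_cons IH // /g sig_pi //.
    case: eqP => [e|ne].
      have ea : tdA x = n - q by rewrite -(tots x hx) e addrK.
      rewrite e ea in h1 h2 *.
      rewrite (bfBr Gt Bf) // ?(bfZr Gt Bf) // ?(bfDl Bf) // ?(bfZl GA Bf) //.
      - by rewrite opprD addrACA.
      - by apply: (degZ GA).
      - by apply: (degZ Gt).
    by rewrite scale0r subr0 addrA.
  rewrite claim // => /eqP; rewrite subr_eq0 => /eqP ->.
  by [].
have tot1 : forall s : seq (tm A Lt), deg1_plus s -> tot 1 s.
  by move=> s h x hx; exact: (h x hx).2.
have wfmap : forall s, tensor_wf degA degt s -> tensor_wf degA degL (tmap pi s).
  by move=> s; apply: wf_tmap.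
have FK : forall s, tensor_wf degA degt s -> deg1_plus s -> teq degA degL (tmap pi s) alpha ->
    exists c, degA (2 - q) c /\ teq degA degt (MCF dA brt dt s) [:: Tm (2 - q) c q z0].
  move=> s ws ds Es; apply: kernel.
  - exact: wf_MCF CA DLt _ ws.
  - exact: tot_MCF (tot1 s ds).
  have -> : tmap pi (MCF dA brt dt s) = MCF dA brL dL (tmap pi s).
    by rewrite /MCF tmap_cat (tmap_tdiff _ _ pid) tmap_tscale (tmap_tbr _ _ pibr).
  apply: teq_trans MCa; exact: teq_MCF CA DL _ _ (wfmap s ws) wfa Es.
split; first exact: FK.
split; first exact: FK.
move=> c c1 hc hc1 Ec Ec1.
pose beta := alphat1 ++ tscale (-1) alphat.
have [b [hb Eb]] : exists b, degA (1 - q) b /\ teq degA degt beta [:: Tm (1 - q) b q z0].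
  apply: kernel.
  - by apply: wf_cat => //; apply: wf_tscale.
  - by apply: tot_cat; [apply: tot1|apply: tot_tscale; apply: tot1].
  move=> W f Bf; rewrite /beta tmap_cat tmap_tscale teval_cat (teval_tscale GA Bf); last exact: wfmap.
  by rewrite (Et W f Bf) (Et1 W f Bf) scaleN1r subrr /teval big_nil.
pose t := [:: Tm (1 - q) b q z0].
have wt : tensor_wf degA degt t by move=> x [<-|[]].
have E2 : teq degA degt alphat1 (alphat ++ t).
  move=> W f Bf; rewrite teval_cat -(Eb W f Bf) /beta teval_cat (teval_tscale GA Bf) //.
  by rewrite scaleN1r addrCA subrr addr0.
have E3 := teq_MCF CA DLt wft1 (wf_cat wft wt) E2.
have sum0 : forall (W : lmodType rat) (u : seq (tm A Lt)) (F : tm A Lt -> W),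
    (forall y, List.In y u -> F y = 0) -> \sum_(y <- u) F y = 0.
  move=> W; elim=> [|y u IH] F H; first by rewrite big_nil.
  by rewrite big_cons H ?IH ?add0r //; [move=> z hz; apply: H; right|left].
have sumeq : forall (W : lmodType rat) (u : seq (tm A Lt)) (F G : tm A Lt -> W),
    (forall y, List.In y u -> F y = G y) -> \sum_(y <- u) F y = \sum_(y <- u) G y.
  move=> W; elim=> [|y u IH] F G H; first by rewrite !big_nil.
  by rewrite !big_cons H ?(IH F G) //; [move=> z hz; apply: H; right|left].
have brz : forall x, brt x z0 = 0 /\ brt z0 x = 0.
  have piz0 : pi z0 = 0 by apply/kerZ; exists 1; rewrite scale1r.
  move=> x; have [h1 h2] := Zcent z0 x piz0; by split.
have comp : forall (W : lmodType rat) (f : int -> int -> A -> Lt -> W), bilin_fam degA degt f ->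
    teval f (MCF dA brt dt (alphat ++ t)) = teval f (MCF dA brt dt alphat) + f (2 - q) q (dA b) z0.
  move=> W f Bf.
  have wat := wf_cat wft wt.
  rewrite /MCF tdiff_cat !teval_cat !(teval_tscale GA Bf); try by apply: (wf_tbr CA DLt).
  have Etd : teval f (tdiff dA dt t) = f (2 - q) q (dA b) z0.
    rewrite /teval /tdiff /= big_cons big_seq1 /= dtz0 (bf0r Gt Bf); last by apply: (degZ GA).
    by rewrite addr0 (_ : 1 - q + 1 = 2 - q) // addrAC.
  have Etb : teval f (tbr brt (alphat ++ t) (alphat ++ t)) = teval f (tbr brt alphat alphat).
    rewrite !teval_tbr big_cat /= big_seq1.
    rewrite (sum0 _ (alphat ++ t)) ?addr0; last first.
      move=> y hy; have [h1 h2] := wat y hy; rewrite /= (brz _).2 (bf0r Gt Bf) //.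
      by apply: (degZ GA); apply: degM.
    apply: sumeq => x hx; have [h1 h2] := wft x hx.
    rewrite big_cat big_seq1 /= (brz _).1 (bf0r Gt Bf) ?addr0 //.
    by apply: (degZ GA); apply: degM.
  by rewrite Etd Etb addrAC /teval big_nil addr0.
pose f0 i j (a : A) (w : Lt) : A := if (i == 2 - q) && (j == q) then phi w *: a else 0.
have Bf0 : bilin_fam degA degt f0.
  move=> i j; split.
    move=> k a1 a2 w _ _ _; rewrite /f0; case: ifP => _; last by rewrite scaler0 addr0.
    by rewrite scalerDr !scalerA mulrC.
  move=> k a w1 w2 _ _ _; rewrite /f0; case: ifP => _; last by rewrite scaler0 addr0.
  by rewrite philin scalerDl scalerA.
have H1 := Ec1 A f0 Bf0.
have H2 := E3 A f0 Bf0.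
have H3 := comp A f0 Bf0.
have H4 := Ec A f0 Bf0.
have e : c1 = c + dA b.
  move: H1; rewrite H2 H3 H4 /teval !big_seq1 /f0 /= !eqxx /= phiz0 !scale1r.
  by move=> ->.
exists (- b); split; first exact: (degN GA).
by rewrite (linN dAlin) e opprD addrA subrr add0r.
Qed.
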